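(* For $r\ge1$ and $x\in\mathbb Z^2$ with $\|x\|\ge r+1$, $$\widehat P_x\big[\widehat\tau_1(B(r))=\infty\big]=1-\frac{a(r)+O(r^{-1})}{a(x)}.$$
   Context: Let $(S_k)_{k\ge 0}$ be simple random walk on $\mathbb Z^2$ and $P_x$ its law when $S_0=x$. Write $\|\cdot\|$ for the Euclidean norm, $y\sim x$ for nearest neighbours, $B(r)=\{y\in\mathbb Z^2:\|y\|\le r\}$. The potential kernel is $a(x)=\sum_{k\ge0}(P_0[S_k=0]-P_x[S_k=0])$; it satisfies $a(0)=0$, $a(x)>0$ for $x\ne0$, $\frac14\sum_{y\sim x}a(y)=a(x)$ for $x\neq 0$, and $a(x)=\frac2\pi\ln\|x\|+\gamma'+O(\|x\|^{-2})$ for a constant $\gamma'$. For real $r\ge1$ set $a(r)=\frac2\pi\ln r+\gamma'$. The conditioned walk $(\widehat S_k)_{k\ge0}$ is the Markov chain on $\mathbb Z^2\setminus\{0\}$ with transition probabilities $p(x,y)=\frac{a(y)}{4a(x)}$ for $y\sim x$ (and $0$ otherwise); it is transient. $\widehat P_x$ denotes its law started at $x\ne0$, and $\widehat\tau_1(A)=\inf\{k\ge1:\widehat S_k\in A\}$. $O(r^{-1})$ denotes a quantity bounded in absolute value by a universal constant times $r^{-1}$. *)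

(* Defs.v *)
From Stdlib Require Import Reals Lra ZArith.
Open Scope R_scope.

Definition pt := (Z * Z)%type.

Definition pt_eq_dec (x y : pt) : {x = y} + {x <> y}.
Proof. decide equality; apply Z.eq_dec. Defined.

Definition norm (x : pt) : R := sqrt (IZR (fst x) ^ 2 + IZR (snd x) ^ 2).

Definition nb_sum (f : pt -> R) (x : pt) : R :=
  f ((fst x + 1)%Z, snd x) + f ((fst x - 1)%Z, snd x)
  + f (fst x, (snd x + 1)%Z) + f (fst x, (snd x - 1)%Z).

(* srw k x y = P_x[S_k = y] for simple random walk on Z^2 *)
Fixpoint srw (k : nat) (x y : pt) : R :=
  match k with
  | O => if pt_eq_dec x y then 1 else 0
  | S k' => / 4 * nb_sum (fun z => srw k' z y) x
  end.

Definition is_potential_kernel (a : pt -> R) : Prop :=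
  forall x : pt,
    infinite_sum (fun k => srw k (0%Z, 0%Z) (0%Z, 0%Z) - srw k x (0%Z, 0%Z)) (a x).

Definition is_gamma' (a : pt -> R) (g : R) : Prop :=
  exists C : R, forall x : pt, x <> (0%Z, 0%Z) ->
    Rabs (a x - (2 / PI * ln (norm x) + g)) <= C / (norm x ^ 2).

Definition a_real (g r : R) : R := 2 / PI * ln r + g.

(* hit_le a r n x = \hat P_x[\hat tau_1(B(r)) <= n], for the conditioned walk
   with transition probabilities p(x,y) = a(y)/(4 a(x)), y ~ x.  *)
Fixpoint hit_le (a : pt -> R) (r : R) (n : nat) (x : pt) : R :=
  match n with
  | O => 0
  | S n' => nb_sum (fun y => a y / (4 * a x) *
              (if Rle_dec (norm y) r then 1 else hit_le a r n' y)) x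
  end.

(* Main.v *)
Require Import Defs.
From Stdlib Require Import Reals Lra Lia ZArith List.
Open Scope R_scope.


Lemma sqrt_le_sq A B : 0 <= B -> A <= B*B -> sqrt A <= B.
Proof. intros HB H. rewrite <- (sqrt_square B) by exact HB. apply sqrt_le_1_alt; exact H. Qed.

Lemma abs_le_sqrt u v : Rabs u <= sqrt (u^2 + v^2).
Proof. rewrite <- sqrt_Rsqr_abs. apply sqrt_le_1_alt. unfold Rsqr. nra. Qed.

Lemma sqrt_step u v d : d*d = 1 -> sqrt ((u+d)^2 + v^2) <= sqrt (u^2+v^2) + 1.
Proof.
  intro Hd. apply sqrt_le_sq. pose proof (sqrt_pos (u^2+v^2)); lra.
  pose proof (abs_le_sqrt u v) as Ha. pose proof (sqrt_sqrt (u^2+v^2)) as Hs.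
  assert (0 <= u^2+v^2) by nra. specialize (Hs H).
  assert (Hd2 : d = 1 \/ d = -1) by (destruct (Rle_dec 0 d); [left; nra | right; nra]).
  assert (u*d <= Rabs u). { destruct (Rcase_abs u); [rewrite Rabs_left by lra|rewrite Rabs_right by lra];
    destruct Hd2; subst; lra. }
  nra.
Qed.

Lemma sqrt_step2 u v d : d*d = 1 -> sqrt (u^2 + v^2) <= sqrt ((u+d)^2+v^2) + 1.
Proof. intro Hd. replace u with ((u+d) + -d) at 1 by ring. apply sqrt_step. nra. Qed.

Lemma norm_pos x : 0 <= norm x.
Proof. apply sqrt_pos. Qed.

Lemma norm_fst x : Rabs (IZR (fst x)) <= norm x.
Proof. apply abs_le_sqrt. Qed.
Lemma norm_snd x : Rabs (IZR (snd x)) <= norm x.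
Proof. unfold norm. rewrite Rplus_comm. apply abs_le_sqrt. Qed.

Lemma norm0 : norm (0%Z,0%Z) = 0.
Proof. unfold norm; simpl. replace (0*(0*1)+0*(0*1)) with 0 by ring. apply sqrt_0. Qed.

Definition nbr (x y : pt) : Prop :=
  y = ((fst x + 1)%Z, snd x) \/ y = ((fst x - 1)%Z, snd x) \/
  y = (fst x, (snd x + 1)%Z) \/ y = (fst x, (snd x - 1)%Z).

Lemma nbr_norm x y : nbr x y -> norm y <= norm x + 1 /\ norm x <= norm y + 1.
Proof.
  unfold nbr, norm. intros [H|[H|[H|H]]]; subst y; simpl;
  rewrite ?plus_IZR, ?minus_IZR; simpl.
  - split; [apply sqrt_step|apply sqrt_step2]; lra.
  - replace (IZR (fst x) - 1) with (IZR (fst x) + -1) by ring.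
    split; [apply sqrt_step|apply sqrt_step2]; lra.
  - rewrite (Rplus_comm (IZR (fst x) ^ 2)), (Rplus_comm (IZR (fst x) ^ 2)).
    split; [apply sqrt_step|apply sqrt_step2]; lra.
  - rewrite (Rplus_comm (IZR (fst x) ^ 2)), (Rplus_comm (IZR (fst x) ^ 2)).
    replace (IZR (snd x) - 1) with (IZR (snd x) + -1) by ring.
    split; [apply sqrt_step|apply sqrt_step2]; lra.
Qed.

Lemma norm_ge1 x : x <> (0%Z,0%Z) -> 1 <= norm x.
Proof.
  destruct x as [u v]. intro H.
  destruct (Z.eq_dec u 0) as [Hu|Hu].
  - assert (v <> 0%Z) by (intro; apply H; subst; reflexivity).
    eapply Rle_trans; [|apply (norm_snd (u,v))]. simpl. rewrite <- abs_IZR. apply IZR_le. lia.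
  - eapply Rle_trans; [|apply (norm_fst (u,v))]. simpl. rewrite <- abs_IZR. apply IZR_le. lia.
Qed.

Lemma nbr_nonzero x y : 1 < norm x -> nbr x y -> y <> (0%Z,0%Z).
Proof. intros H Hn E. subst. destruct (nbr_norm _ _ Hn). rewrite norm0 in *. lra. Qed.

Lemma nb_sum_ext f g x : (forall y, nbr x y -> f y = g y) -> nb_sum f x = nb_sum g x.
Proof. intro H. unfold nb_sum. unfold nbr in H. rewrite !H by tauto. reflexivity. Qed.

Lemma nb_sum_le f g x : (forall y, nbr x y -> f y <= g y) -> nb_sum f x <= nb_sum g x.
Proof. intro H. unfold nb_sum. unfold nbr in H.
  pose proof (H ((fst x + 1)%Z, snd x)). pose proof (H ((fst x - 1)%Z, snd x)).
  pose proof (H (fst x, (snd x + 1)%Z)). pose proof (H (fst x, (snd x - 1)%Z)).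
  assert (forall P Q : Prop, P -> P \/ Q) as L by tauto.
  assert (forall P Q : Prop, Q -> P \/ Q) as Rr by tauto.
  specialize (H0 (L _ _ eq_refl)). specialize (H1 (Rr _ _ (L _ _ eq_refl))).
  specialize (H2 (Rr _ _ (Rr _ _ (L _ _ eq_refl)))). specialize (H3 (Rr _ _ (Rr _ _ (Rr _ _ eq_refl)))).
  lra. Qed.

Lemma nb_sum_plus f g x : nb_sum (fun y => f y + g y) x = nb_sum f x + nb_sum g x.
Proof. unfold nb_sum; ring. Qed.
Lemma nb_sum_scal c f x : nb_sum (fun y => c * f y) x = c * nb_sum f x.
Proof. unfold nb_sum; ring. Qed.
Lemma nb_sum_const c x : nb_sum (fun _ => c) x = 4 * c.
Proof. unfold nb_sum; ring. Qed.

Lemma srw_nonneg n : forall x y, 0 <= srw n x y.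
Proof.
  induction n; intros x y; cbn [srw].
  - destruct (pt_eq_dec x y); lra.
  - unfold nb_sum. pose proof (IHn ((fst x + 1)%Z, snd x) y). pose proof (IHn ((fst x - 1)%Z, snd x) y).
    pose proof (IHn (fst x, (snd x + 1)%Z) y). pose proof (IHn (fst x, (snd x - 1)%Z) y). lra.
Qed.

Lemma srw_parity n : forall x k, (fst x + snd x + Z.of_nat n = 2*k+1)%Z -> srw n x (0%Z,0%Z) = 0.
Proof.
  induction n; intros [u v] k H; cbn [srw fst snd] in *.
  - destruct (pt_eq_dec (u,v) (0%Z,0%Z)) as [E|E]; [|reflexivity]. inversion E; subst. lia.
  - unfold nb_sum; cbn [fst snd].
    rewrite (IHn _ k) by (cbn [fst snd]; lia). rewrite (IHn _ (k-1)%Z) by (cbn [fst snd]; lia).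
    rewrite (IHn _ k) by (cbn [fst snd]; lia). rewrite (IHn _ (k-1)%Z) by (cbn [fst snd]; lia). ring.
Qed.

Lemma srw_transl n : forall x y, srw n x y = srw n ((fst x - fst y)%Z, (snd x - snd y)%Z) (0%Z,0%Z).
Proof.
  induction n; intros [u v] [s t]; cbn [srw fst snd].
  - destruct (pt_eq_dec (u,v) (s,t)) as [E|E]; destruct (pt_eq_dec ((u-s)%Z,(v-t)%Z) (0%Z,0%Z)) as [F|F]; auto.
    + exfalso. inversion E; subst. apply F. f_equal; lia.
    + exfalso. inversion F. apply E. f_equal; lia.
  - unfold nb_sum; cbn [fst snd]. rewrite (IHn (_,v)), (IHn (_,v)), (IHn (u,_)), (IHn (u,_)). cbn [fst snd].
    replace (u+1-s)%Z with (u-s+1)%Z by lia. replace (u-1-s)%Z with (u-s-1)%Z by lia.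
    replace (v+1-t)%Z with (v-t+1)%Z by lia. replace (v-1-t)%Z with (v-t-1)%Z by lia. reflexivity.
Qed.

Lemma sum_terms_to_0 f l : infinite_sum f l -> forall eps, 0 < eps -> exists N, forall n, (N <= n)%nat -> Rabs (f n) < eps.
Proof.
  intros H eps He. destruct (H (eps/2)) as [N HN]; [lra|].
  exists (S N). intros n Hn. destruct n; [lia|].
  pose proof (HN (S n) ltac:(lia)) as A. pose proof (HN n ltac:(lia)) as B.
  unfold Rdist in *. simpl in A.
  replace (f (S n)) with ((sum_f_R0 f n + f (S n) - l) - (sum_f_R0 f n - l)) by ring.
  eapply Rle_lt_trans; [apply Rabs_triang|]. rewrite Rabs_Ropp. lra.
Qed.

Definition o : pt := (0%Z,0%Z).

Lemma p_to_0 a : is_potential_kernel a -> Un_cv (fun k => srw k o o) 0.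
Proof.
  intros Ha eps He.
  destruct (sum_terms_to_0 _ _ (Ha (1%Z,0%Z)) (eps/4) ltac:(lra)) as [N HN].
  exists N. intros n Hn. unfold Rdist. rewrite Rminus_0_r. rewrite Rabs_right by (apply Rle_ge, srw_nonneg).
  destruct (Nat.Even_or_Odd n) as [[m Hm]|[m Hm]].
  -
    assert (Hq : srw n o o <= 4 * srw (S n) (1%Z,0%Z) o).
    { cbn [srw]. unfold nb_sum; cbn [fst snd]. idtac.
      replace (1-1)%Z with 0%Z by reflexivity. replace (1+1)%Z with 2%Z by reflexivity.
      replace (0+1)%Z with 1%Z by reflexivity. replace (0-1)%Z with (-1)%Z by reflexivity.
      pose proof (srw_nonneg n (2%Z,0%Z) o). pose proof (srw_nonneg n (1%Z,1%Z) o).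
      pose proof (srw_nonneg n (1%Z,(-1))%Z o). unfold o in *. lra. }
    assert (Hp : srw (S n) o o = 0) by (apply (srw_parity _ _ (Z.of_nat m)); unfold o; cbn [fst snd]; lia).
    pose proof (HN (S n) ltac:(lia)) as T. cbv beta in T. fold o in T. rewrite Hp in T.
    rewrite Rminus_0_l, Rabs_Ropp, Rabs_right in T by (apply Rle_ge, srw_nonneg). lra.
  - rewrite (srw_parity _ _ (Z.of_nat m)) by (unfold o; cbn [fst snd]; lia). lra.
Qed.

Lemma srw0_to_0 a : is_potential_kernel a -> forall x, Un_cv (fun k => srw k x o) 0.
Proof.
  intros Ha x eps He.
  destruct (p_to_0 a Ha (eps/2) ltac:(lra)) as [N1 H1].
  destruct (sum_terms_to_0 _ _ (Ha x) (eps/2) ltac:(lra)) as [N2 H2].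
  exists (N1+N2)%nat. intros n Hn. specialize (H1 n ltac:(lia)). specialize (H2 n ltac:(lia)).
  unfold Rdist in *. rewrite Rminus_0_r in *. fold o in H2.
  replace (srw n x o) with (srw n o o - (srw n o o - srw n x o)) by ring.
  eapply Rle_lt_trans; [apply Rabs_triang|]. rewrite Rabs_Ropp. lra.
Qed.

Lemma srw_to_0 a : is_potential_kernel a -> forall x y, Un_cv (fun k => srw k x y) 0.
Proof.
  intros Ha x y. eapply Un_cv_ext; [|apply (srw0_to_0 a Ha ((fst x - fst y)%Z, (snd x - snd y)%Z))].
  intro n. simpl. symmetry. apply srw_transl.
Qed.

Definition Sx (x : pt) (n : nat) := sum_f_R0 (fun k => srw k o o - srw k x o) n.

Lemma Sx_cv a : is_potential_kernel a -> forall x, Un_cv (Sx x) (a x).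
Proof. intros Ha x. exact (Ha x). Qed.

Lemma a_zero a : is_potential_kernel a -> a o = 0.
Proof.
  intro Ha. apply (uniqueness_sum (fun k => srw k o o - srw k o o)). exact (Ha o).
  intros eps He. exists 0%nat. intros n _. unfold Rdist.
  replace (sum_f_R0 (fun k => srw k o o - srw k o o) n) with 0. rewrite Rminus_0_r, Rabs_R0; lra.
  induction n; simpl; [ring|rewrite <- IHn; ring].
Qed.

Lemma srw0_ne x : x <> o -> srw 0 x o = 0.
Proof. intro H. cbn [srw]. destruct (pt_eq_dec x o); [contradiction|reflexivity]. Qed.
Lemma srw0_o : srw 0 o o = 1.
Proof. cbn [srw]. destruct (pt_eq_dec o o); [reflexivity|contradiction]. Qed.

Lemma harmonic a : is_potential_kernel a -> forall x, x <> o -> nb_sum a x = 4 * a x.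
Proof.
  intros Ha x Hx.
  set (T := fun n => sum_f_R0 (fun k => srw k o o - srw (S k) x o) n).
  assert (I1 : forall n, T n = Sx x (S n) - srw (S n) o o).
  { induction n; unfold T, Sx in *; cbn [sum_f_R0].
    - rewrite srw0_o, srw0_ne by exact Hx. ring.
    - rewrite IHn. cbn [sum_f_R0]. ring. }
  assert (I2 : forall n, T n = / 4 * (Sx ((fst x + 1)%Z, snd x) n + Sx ((fst x - 1)%Z, snd x) n
                                    + Sx (fst x, (snd x + 1)%Z) n + Sx (fst x, (snd x - 1)%Z) n)).
  { induction n; unfold T, Sx in *; cbn [sum_f_R0].
    - cbn [srw]. unfold nb_sum. field.
    - rewrite IHn. cbn [srw]. unfold nb_sum. field. }
  assert (C1 : Un_cv T (a x - 0)).
  { eapply Un_cv_ext. intro n; symmetry; apply I1.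
    apply CV_minus. intros eps He. destruct (Sx_cv a Ha x eps He) as [N HN]. exists N. intros; apply HN; lia.
    intros eps He. destruct (p_to_0 a Ha eps He) as [N HN]. exists N. intros; apply HN; lia. }
  assert (C2 : Un_cv T (/4 * (a ((fst x + 1)%Z, snd x) + a ((fst x - 1)%Z, snd x)
                                    + a (fst x, (snd x + 1)%Z) + a (fst x, (snd x - 1)%Z)))).
  { eapply Un_cv_ext. intro n; symmetry; apply I2.
    apply CV_mult. intros eps He; exists 0%nat; intros; unfold Rdist; rewrite Rminus_diag, Rabs_R0; lra.
    repeat apply CV_plus; apply Sx_cv; exact Ha. }
  pose proof (UL_sequence _ _ _ C1 C2). unfold nb_sum. lra.
Qed.

Lemma ln_le' x y : 0 < x -> x <= y -> ln x <= ln y.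
Proof. intros Hx [H|H]. left; apply ln_increasing; auto. subst; lra. Qed.

Lemma a_large a g : is_gamma' a g -> forall M, exists R, 1 <= R /\ forall y, R <= norm y -> M <= a y.
Proof.
  intros [C0 HC] M.
  set (T := (M - g + Rabs C0) * (PI / 2)).
  exists (Rmax 1 (exp T)). split; [apply Rmax_l|].
  intros y Hy.
  assert (H1 : 1 <= norm y) by (eapply Rle_trans; [apply Rmax_l|exact Hy]).
  assert (Hne : y <> (0%Z,0%Z)). { intro E; subst. rewrite norm0 in H1; lra. }
  specialize (HC y Hne).
  assert (HT : T <= ln (norm y)).
  { rewrite <- (ln_exp T). apply ln_le'. apply exp_pos. eapply Rle_trans; [apply Rmax_r|exact Hy]. }
  assert (Hq : C0 / norm y ^ 2 <= Rabs C0).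
  { assert (1 <= norm y ^ 2) by nra. unfold Rdiv.
    apply Rle_trans with (Rabs C0 * / norm y ^ 2).
    apply Rmult_le_compat_r. left; apply Rinv_0_lt_compat; lra. apply Rle_abs.
    rewrite <- (Rmult_1_r (Rabs C0)) at 2. apply Rmult_le_compat_l. apply Rabs_pos.
    rewrite <- Rinv_1. apply Rinv_le_contravar; lra. }
  assert (HP := PI_RGT_0).
  assert (2 / PI * T <= 2 / PI * ln (norm y)).
  { apply Rmult_le_compat_l; [|exact HT]. left. apply Rdiv_lt_0_compat; lra. }
  assert (E : 2 / PI * T = M - g + Rabs C0) by (unfold T; field; lra).
  pose proof (Rle_abs (-(a y - (2 / PI * ln (norm y) + g)))) as Q. rewrite Rabs_Ropp in Q. lra.
Qed.

Definition Zrange (N : Z) : list Z := map (fun k => (Z.of_nat k - N)%Z) (seq 0 (Z.to_nat (2*N+1))).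
Definition box N := list_prod (Zrange N) (Zrange N).

Lemma in_Zrange N u : (Z.abs u <= N)%Z -> In u (Zrange N).
Proof.
  intro H. unfold Zrange. apply in_map_iff. exists (Z.to_nat (u + N)). split. lia.
  apply in_seq. lia.
Qed.

Lemma in_box N u v : (Z.abs u <= N)%Z -> (Z.abs v <= N)%Z -> In (u,v) (box N).
Proof. intros. apply in_prod; apply in_Zrange; auto. Qed.

Lemma list_min (f : pt -> R) (l : list pt) : l <> nil -> exists z, In z l /\ forall w, In w l -> f z <= f w.
Proof.
  induction l as [|x l IH]; intro H; [contradiction|].
  destruct l as [|y l'].
  - exists x. split; [left; auto|]. intros w [E|[]]; subst; lra.
  - destruct IH as [z [Hz Hm]]; [discriminate|].
    destruct (Rle_dec (f x) (f z)).
    + exists x. split; [left; auto|]. intros w [E|Hw]; [subst; lra|]. specialize (Hm w Hw); lra.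
    + exists z. split; [right; auto|]. intros w [E|Hw]; [subst; lra|]. auto.
Qed.

Lemma norm_lt_box R N y : R <= IZR N -> norm y < R -> In y (box N).
Proof.
  intros HN Hy. destruct y as [u v]. pose proof (norm_fst (u,v)). pose proof (norm_snd (u,v)).
  simpl in *. rewrite <- abs_IZR in *. apply in_box; apply le_IZR; lra.
Qed.

Lemma a_pos a g : is_potential_kernel a -> is_gamma' a g -> forall y, y <> o -> 0 < a y.
Proof.
  intros Ha Hg y0 Hy0. apply Rnot_le_lt. intro Hle.
  destruct (a_large a g Hg 1) as [R [HR1 HR]].
  set (N := up R). assert (HN : R < IZR N) by (apply archimed).
  destruct (list_min a (box N)) as [z [Hz Hmin]].
  { intro E. assert (In o (box N)) by (apply (norm_lt_box R); [lra| unfold o; rewrite norm0; lra]). rewrite E in H; auto. }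
  assert (Hglob : forall w, a z <= a w).
  { intro w. destruct (Rlt_dec (norm w) R).
    - apply Hmin. apply (norm_lt_box R); auto; lra.
    - assert (norm y0 < R). { apply Rnot_le_lt. intro. specialize (HR y0 H). lra. }
      specialize (Hmin y0 (norm_lt_box R N y0 ltac:(lra) H)). specialize (HR w ltac:(lra)). lra. }
  set (m := a z).
  assert (Hm0 : m <= 0) by (specialize (Hglob y0); unfold m; lra).
  assert (Hy1 : exists y1, y1 <> o /\ a y1 = m).
  { destruct (pt_eq_dec z o) as [E|E].
    - exists y0. split; auto. unfold m. rewrite E, a_zero by auto. rewrite E, a_zero in Hglob by auto.
      specialize (Hglob y0). lra.
    - exists z. auto. }
  destruct Hy1 as [[u v] [Hne Hy1]].
  set (s := if Z_le_dec 0 u then 1%Z else (-1)%Z).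
  assert (Spread : forall k : nat, a ((u + s * Z.of_nat k)%Z, v) = m).
  { induction k.
    - replace (u + s * Z.of_nat 0)%Z with u by lia. exact Hy1.
    - set (w := ((u + s * Z.of_nat k)%Z, v)) in *.
      assert (Hw : w <> o).
      { unfold w, o, s. intro E. inversion E. apply Hne. unfold o. destruct (Z_le_dec 0 u); f_equal; lia. }
      pose proof (harmonic a Ha w Hw) as Hh. rewrite IHk in Hh. unfold nb_sum in Hh. unfold w in Hh; cbn [fst snd] in Hh.
      pose proof (Hglob ((u + s * Z.of_nat k + 1)%Z, v)). pose proof (Hglob ((u + s * Z.of_nat k - 1)%Z, v)).
      pose proof (Hglob ((u + s * Z.of_nat k)%Z, (v+1)%Z)). pose proof (Hglob ((u + s * Z.of_nat k)%Z, (v-1)%Z)).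

      unfold s in *; destruct (Z_le_dec 0 u).
      + replace (u + 1 * Z.of_nat (S k))%Z with (u + 1 * Z.of_nat k + 1)%Z by lia. unfold m in *; lra.
      + replace (u + -1 * Z.of_nat (S k))%Z with (u + -1 * Z.of_nat k - 1)%Z by lia. unfold m in *; lra. }
  set (k := Z.to_nat (N + Z.abs u)).
  specialize (Spread k).
  assert (Hfar : R <= norm ((u + s * Z.of_nat k)%Z, v)).
  { eapply Rle_trans; [|apply norm_fst]. cbn [fst]. rewrite <- abs_IZR.
    apply Rle_trans with (IZR N); [lra|]. apply IZR_le. unfold k, s.
    assert (0 <= N)%Z by (apply le_IZR; lra). destruct (Z_le_dec 0 u); lia. }
  specialize (HR _ Hfar). lra.
Qed.

Fixpoint Kf (r : R) (f : pt -> R) (n : nat) (x : pt) : R :=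
  match n with
  | O => f x
  | S n' => / 4 * nb_sum (fun y => if Rle_dec (norm y) r then 0 else Kf r f n' y) x
  end.

Lemma Kf_le r f h : (forall y, f y <= h y) -> forall n x, Kf r f n x <= Kf r h n x.
Proof.
  intros H n. induction n; intro x; cbn [Kf]; auto.
  apply Rmult_le_compat_l; [lra|]. apply nb_sum_le. intros y _. destruct Rle_dec; [lra|auto].
Qed.

Lemma Kf_plus r f h : forall n x, Kf r (fun y => f y + h y) n x = Kf r f n x + Kf r h n x.
Proof.
  induction n; intro x; cbn [Kf]; auto.
  rewrite <- Rmult_plus_distr_l, <- nb_sum_plus. f_equal. apply nb_sum_ext. intros y _.
  destruct Rle_dec; [ring|auto].
Qed.

Lemma Kf_scal r c f : forall n x, Kf r (fun y => c * f y) n x = c * Kf r f n x.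
Proof.
  induction n; intro x; cbn [Kf]; auto.
  rewrite (nb_sum_ext _ (fun y => c * (if Rle_dec (norm y) r then 0 else Kf r f n y))).
  rewrite nb_sum_scal; ring.
  intros y _. destruct Rle_dec; [ring|auto].
Qed.

Lemma Kf_zero r : forall n x, Kf r (fun _ => 0) n x = 0.
Proof.
  induction n; intro x; cbn [Kf]; auto.
  rewrite (nb_sum_ext _ (fun _ => 0)). rewrite nb_sum_const; ring.
  intros y _. destruct Rle_dec; auto.
Qed.

Lemma Kf_nonneg r f : (forall y, 0 <= f y) -> forall n x, 0 <= Kf r f n x.
Proof. intros H n x. rewrite <- (Kf_zero r n x). apply Kf_le. auto. Qed.

Definition delta (z y : pt) : R := if pt_eq_dec y z then 1 else 0.

Lemma Kf_delta r z : forall n x, Kf r (delta z) n x <= srw n x z.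
Proof.
  induction n; intro x; cbn [Kf srw]. unfold delta; lra.
  apply Rmult_le_compat_l; [lra|]. apply nb_sum_le. intros y _. destruct Rle_dec; auto.
  apply srw_nonneg.
Qed.

Lemma a_nonneg a g : is_potential_kernel a -> is_gamma' a g -> forall y, 0 <= a y.
Proof.
  intros Ha Hg y. destruct (pt_eq_dec y o). subst; rewrite a_zero; auto; lra.
  left; eapply a_pos; eauto.
Qed.

Lemma Kf_a a g r : is_potential_kernel a -> is_gamma' a g -> 0 <= r ->
  forall n x, r < norm x -> Kf r a n x <= a x.
Proof.
  intros Ha Hg Hr. induction n; intros x Hx; cbn [Kf]; [lra|].
  assert (Hxo : x <> o). { intro E; subst. unfold o in Hx; rewrite norm0 in Hx; lra. }
  rewrite <- (Rmult_1_l (a x)). replace 1 with (/4*4) by field. rewrite Rmult_assoc, <- (harmonic a Ha x Hxo).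
  apply Rmult_le_compat_l; [lra|]. apply nb_sum_le. intros y _. destruct Rle_dec.
  eapply a_nonneg; eauto. apply IHn. lra.
Qed.

Definition lsum (l : list pt) (F : pt -> R) : R := fold_right (fun z acc => F z + acc) 0 l.

Lemma lsum_nonneg l F : (forall z, 0 <= F z) -> 0 <= lsum l F.
Proof. intro H. induction l; simpl; [lra|]. specialize (H a); lra. Qed.

Lemma lsum_in l y : In y l -> 1 <= lsum l (fun z => delta z y).
Proof.
  induction l as [|b l IHl]; [simpl; tauto|]. intro Hin.
  change (1 <= delta b y + lsum l (fun z => delta z y)).
  assert (Hd : forall z, 0 <= delta z y) by (intro; unfold delta; destruct pt_eq_dec; lra).
  pose proof (lsum_nonneg l _ Hd). pose proof (Hd b).
  destruct Hin as [E|Hi].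
  - subst. unfold delta at 1. destruct pt_eq_dec; [lra|congruence].
  - specialize (IHl Hi). lra.
Qed.

Lemma Kf_lsum r l : forall n x, Kf r (fun y => lsum l (fun z => delta z y)) n x = lsum l (fun z => Kf r (delta z) n x).
Proof.
  induction l; intros n x; simpl. apply Kf_zero.
  rewrite Kf_plus. f_equal. apply IHl.
Qed.

Lemma lsum_cv a : is_potential_kernel a -> forall l x, Un_cv (fun n => lsum l (fun z => srw n x z)) 0.
Proof.
  intros Ha l x. induction l as [|b l IHl]; simpl.
  - intros eps He. exists 0%nat. intros. unfold Rdist. rewrite Rminus_0_r, Rabs_R0. lra.
  - rewrite <- (Rplus_0_r 0). apply CV_plus. eapply srw_to_0; eauto. exact IHl.
Qed.

Lemma recurrence a g r : is_potential_kernel a -> is_gamma' a g -> 0 <= r ->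
  forall x, r < norm x -> Un_cv (fun n => Kf r (fun _ => 1) n x) 0.
Proof.
  intros Ha Hg Hr x Hx eps He.
  assert (Hxo : x <> o). { intro E; subst. unfold o in Hx; rewrite norm0 in Hx; lra. }
  assert (Hax := a_pos a g Ha Hg x Hxo).
  destruct (a_large a g Hg (2 * a x / eps)) as [R [HR1 HR]].
  set (N := up R). assert (HN : R < IZR N) by (apply archimed).
  set (c := eps / (2 * a x)).
  assert (Hc : 0 < c) by (unfold c; apply Rdiv_lt_0_compat; lra).
  assert (Pt : forall y, 1 <= lsum (box N) (fun z => delta z y) + c * a y).
  { intro y. pose proof (a_nonneg a g Ha Hg y).
    pose proof (lsum_nonneg (box N) (fun z => delta z y) ltac:(intro; unfold delta; destruct pt_eq_dec; lra)).
    destruct (Rlt_dec (norm y) R).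
    - pose proof (lsum_in (box N) y (norm_lt_box R N y ltac:(lra) r0)). nra.
    - specialize (HR y ltac:(lra)). assert (c * a y >= 1).
      { unfold c. apply Rle_ge. replace 1 with (eps / (2 * a x) * (2 * a x / eps)) by (field; lra).
        apply Rmult_le_compat_l; [left; apply Rdiv_lt_0_compat; lra | lra]. } lra. }
  destruct (lsum_cv a Ha (box N) x (eps/2) ltac:(lra)) as [N0 HN0].
  exists N0. intros n Hn. specialize (HN0 n Hn). unfold Rdist in *. rewrite Rminus_0_r in *.
  pose proof (Kf_le r _ _ Pt n x) as B. rewrite Kf_plus, Kf_scal, Kf_lsum in B.
  pose proof (Kf_a a g r Ha Hg Hr n x Hx).
  assert (lsum (box N) (fun z => Kf r (delta z) n x) <= lsum (box N) (fun z => srw n x z)).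
  { clear. induction (box N) as [|b l IHl]; simpl; [lra|]. pose proof (Kf_delta r b n x). lra. }
  pose proof (Kf_nonneg r (fun _ => 1) ltac:(intro; lra) n x).
  rewrite Rabs_right in * by lra.
  assert (c * Kf r a n x <= eps / 2).
  { apply Rle_trans with (c * a x). apply Rmult_le_compat_l; lra. unfold c. right. field. lra. }
  pose proof (Rle_abs (lsum (box N) (fun z => srw n x z))). lra.
Qed.

Lemma ln_diff t r : 0 < t -> t <= r -> ln r - ln t <= (r - t) / t.
Proof.
  intros Ht Htr. assert (Hr : 0 < r) by lra.
  assert (E : ln r - ln t = ln (r * / t)) by (rewrite ln_mult, ln_Rinv; try ring; try apply Rinv_0_lt_compat; lra).
  rewrite E. replace ((r - t)/t) with (r * / t - 1) by (field; lra).
  rewrite <- (ln_exp (r * / t - 1)). apply ln_le'.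
  apply Rmult_lt_0_compat; [lra|apply Rinv_0_lt_compat; lra].
  pose proof (exp_ineq1_le (r * / t - 1)). lra.
Qed.

Lemma near a g : is_gamma' a g -> exists K, 0 <= K /\ forall r y, 1 <= r -> r - 1 < norm y <= r -> y <> o ->
   Rabs (a y - a_real g r) <= K / r.
Proof.
  intros [C0 HC]. exists (2 + 2 * Rabs C0). split. pose proof (Rabs_pos C0); lra.
  intros r y Hr [Hy1 Hy2] Hyo.
  assert (Hn1 : 1 <= norm y) by (apply norm_ge1; exact Hyo).
  assert (Hinv : / norm y <= 2 / r).
  { apply Rle_trans with (/ (r/2)). apply Rinv_le_contravar. lra.
    destruct (Rle_dec 2 r); lra. right; field; lra. }
  assert (Hinv2 : / norm y ^ 2 <= / norm y).
  { apply Rinv_le_contravar; nra. }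
  specialize (HC y Hyo).
  assert (HP := PI_RGT_0). assert (HP2 := PI2_1).
  assert (Hq : 2 / PI < 1). { apply Rmult_lt_reg_r with (PI/2); [lra|]. field_simplify; lra. }
  assert (Hq0 : 0 < 2 / PI) by (apply Rdiv_lt_0_compat; lra).
  assert (L1 : 0 <= ln r - ln (norm y)) by (pose proof (ln_le' (norm y) r ltac:(lra) Hy2); lra).
  assert (L2 : ln r - ln (norm y) <= 2 / r).
  { eapply Rle_trans; [apply ln_diff; lra|]. unfold Rdiv at 1. eapply Rle_trans; [|exact Hinv].
    rewrite <- (Rmult_1_l (/ norm y)) at 2. apply Rmult_le_compat_r; [left; apply Rinv_0_lt_compat; lra|lra]. }
  assert (L3 : C0 / norm y ^ 2 <= Rabs C0 * (2 / r)).
  { unfold Rdiv at 1. apply Rle_trans with (Rabs C0 * / norm y ^ 2).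
    apply Rmult_le_compat_r. left; apply Rinv_0_lt_compat; nra. apply Rle_abs.
    apply Rmult_le_compat_l. apply Rabs_pos. lra. }
  unfold a_real. replace ((2 + 2 * Rabs C0) / r) with (2/r + Rabs C0 * (2/r)) by (field; lra).
  replace (a y - (2 / PI * ln r + g)) with ((a y - (2 / PI * ln (norm y) + g)) - 2/PI * (ln r - ln (norm y))) by ring.
  eapply Rle_trans; [apply Rabs_triang|]. rewrite Rabs_Ropp.
  rewrite (Rabs_right (2 / PI * _)) by (apply Rle_ge; apply Rmult_le_pos; lra).
  assert (2 / PI * (ln r - ln (norm y)) <= 2 / r).
  { eapply Rle_trans; [|exact L2]. rewrite <- (Rmult_1_l (ln r - _)) at 2. apply Rmult_le_compat_r; lra. }
  lra.
Qed.

Fixpoint Gf (a : pt -> R) (r : R) (phi : pt -> R) (n : nat) (x : pt) : R :=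
  match n with
  | O => 0
  | S n' => nb_sum (fun y => a y / (4 * a x) *
              (if Rle_dec (norm y) r then phi y else Gf a r phi n' y)) x
  end.

Lemma hit_eq a r : forall n x, hit_le a r n x = Gf a r (fun _ => 1) n x.
Proof.
  induction n; intro x; cbn [hit_le Gf]; auto.
  apply nb_sum_ext. intros y _. destruct Rle_dec; [reflexivity|rewrite IHn; reflexivity].
Qed.

Lemma G_lin a r c1 c2 f h : forall n x,
  Gf a r (fun y => c1 * f y + c2 * h y) n x = c1 * Gf a r f n x + c2 * Gf a r h n x.
Proof.
  induction n; intro x; cbn [Gf]. ring.
  rewrite <- !nb_sum_scal, <- nb_sum_plus. apply nb_sum_ext. intros y _.
  destruct Rle_dec; [ring|]. rewrite IHn. ring.
Qed.

Section S.
Variable a : pt -> R.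
Variable g : R.
Hypothesis Ha : is_potential_kernel a.
Hypothesis Hg : is_gamma' a g.

Lemma w_nonneg x y : 0 <= a y / (4 * a x).
Proof.
  pose proof (a_nonneg a g Ha Hg x). pose proof (a_nonneg a g Ha Hg y).
  unfold Rdiv. apply Rmult_le_pos; auto. destruct H. left; apply Rinv_0_lt_compat; lra.
  rewrite <- H, Rmult_0_r, Rinv_0. lra.
Qed.

Lemma G_le_cond r f h : 1 <= r -> (forall y, r - 1 < norm y <= r -> f y <= h y) ->
  forall n x, r < norm x -> Gf a r f n x <= Gf a r h n x.
Proof.
  intros Hr H. induction n; intros x Hx; cbn [Gf]; [lra|].
  apply nb_sum_le. intros y Hy. apply Rmult_le_compat_l. apply w_nonneg.
  destruct (nbr_norm x y Hy). destruct Rle_dec. apply H; lra. apply IHn; lra.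
Qed.

Lemma G1_growing r : forall n x, Gf a r (fun _ => 1) n x <= Gf a r (fun _ => 1) (S n) x.
Proof.
  induction n; intro x.
  - cbn [Gf]. apply Rle_trans with (nb_sum (fun _ => 0) x). rewrite nb_sum_const; lra. apply nb_sum_le. intros y _.
    apply Rmult_le_pos. apply w_nonneg. destruct Rle_dec; lra.
  - change (Gf a r (fun _ => 1) (S n) x) with (nb_sum (fun y => a y / (4 * a x) *
              (if Rle_dec (norm y) r then 1 else Gf a r (fun _ => 1) n y)) x).
    change (Gf a r (fun _ => 1) (S (S n)) x) with (nb_sum (fun y => a y / (4 * a x) *
              (if Rle_dec (norm y) r then 1 else Gf a r (fun _ => 1) (S n) y)) x).
    apply nb_sum_le. intros y _. apply Rmult_le_compat_l. apply w_nonneg. destruct Rle_dec; [lra|auto].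
Qed.

Lemma G1_le1 r : forall n x, Gf a r (fun _ => 1) n x <= 1.
Proof.
  induction n; intro x; cbn [Gf]. lra.
  destruct (pt_eq_dec x o) as [E|E].
  - subst. rewrite (nb_sum_ext _ (fun _ => 0)). rewrite nb_sum_const; lra.
    intros y _. rewrite (a_zero a Ha), Rmult_0_r. unfold Rdiv. rewrite Rinv_0. ring.
  - assert (Hax := a_pos a g Ha Hg x E).
    apply Rle_trans with (nb_sum (fun y => a y / (4 * a x)) x).
    apply nb_sum_le. intros y _. rewrite <- (Rmult_1_r (a y / (4 * a x))) at 2.
    apply Rmult_le_compat_l. apply w_nonneg. destruct Rle_dec; [lra|auto].
    right. unfold Rdiv. rewrite nb_sum_ext with (g := fun y => / (4 * a x) * a y) by (intros; ring).
    rewrite nb_sum_scal, (harmonic a Ha x E). field. lra.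
Qed.

Lemma G_identity r : 1 <= r -> forall n x, r < norm x ->
  a x * Gf a r (fun y => / a y) n x = 1 - Kf r (fun _ => 1) n x.
Proof.
  intros Hr. induction n; intros x Hx; cbn [Gf Kf]. ring.
  assert (Hxo : x <> o). { intro E; subst. unfold o in Hx; rewrite norm0 in Hx; lra. }
  assert (Hax := a_pos a g Ha Hg x Hxo).
  rewrite <- nb_sum_scal.
  rewrite (nb_sum_ext _ (fun y => / 4 * (1 - (if Rle_dec (norm y) r then 0 else Kf r (fun _ => 1) n y)))).
  unfold nb_sum; cbv beta; field.
  intros y Hy. destruct (nbr_norm x y Hy). destruct Rle_dec.
  - assert (Hyo : y <> o) by (apply (nbr_nonzero x y); auto; lra).
    assert (Hay := a_pos a g Ha Hg y Hyo). field. lra.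
  - rewrite <- (IHn y) by lra. field. lra.
Qed.

End S.

Lemma cv_const c : Un_cv (fun _ => c) c.
Proof. intros eps He. exists 0%nat. intros. unfold Rdist. rewrite Rminus_diag, Rabs_R0. lra. Qed.

Lemma G_scal a r c f : forall n x, Gf a r (fun y => c * f y) n x = c * Gf a r f n x.
Proof.
  induction n; intro x; cbn [Gf]. ring.
  rewrite <- nb_sum_scal. apply nb_sum_ext. intros y _.
  destruct Rle_dec; [ring|]. rewrite IHn. ring.
Qed.

Lemma abs_bounds z b : Rabs z <= b -> -b <= z <= b.
Proof. intro H. pose proof (Rle_abs z). pose proof (Rle_abs (-z)). rewrite Rabs_Ropp in *. lra. Qed.

Theorem lemma3p4 :
  forall (a : pt -> R) (g : R),
    is_potential_kernel a -> is_gamma' a g ->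
    exists C : R,
      forall (r : R) (x : pt), 1 <= r -> r + 1 <= norm x ->
        exists L : R,
          Un_cv (fun n => hit_le a r n x) L /\
          exists e : R, Rabs e <= C / r /\
            1 - L = 1 - (a_real g r + e) / a x.
Proof.
  intros a g Ha Hg. destruct (near a g Hg) as [K [HK0 HK]]. exists K.
  intros r x Hr Hx.
  assert (Hxr : r < norm x) by lra.
  assert (Hxo : x <> o). { intro E; subst. unfold o in Hx; rewrite norm0 in Hx; lra. }
  assert (Hax := a_pos a g Ha Hg x Hxo).
  set (u := fun n => Gf a r (fun _ => 1) n x).
  set (v := fun n => Gf a r (fun y => / a y) n x).
  destruct (growing_cv u) as [L HL].
  { intro n. apply (G1_growing a g Ha Hg). }
  { exists 1. intros z [i Hi]. subst z. apply (G1_le1 a g Ha Hg). }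
  exists L. split.
  { eapply Un_cv_ext; [|exact HL]. intro n. unfold u. symmetry. apply hit_eq. }
  set (A := a_real g r).
  assert (Hv : forall n, v n = (1 - Kf r (fun _ => 1) n x) * / a x).
  { intro n. unfold v. rewrite <- (G_identity a g Ha Hg r Hr n x Hxr). field. lra. }
  assert (Hvle : forall n, v n <= / a x).
  { intro n. rewrite Hv. pose proof (Kf_nonneg r (fun _ => 1) ltac:(intro; lra) n x).
    pose proof (Rinv_0_lt_compat _ Hax). nra. }
  assert (Cv : Un_cv v ((1 - 0) * / a x)).
  { eapply Un_cv_ext. intro n; symmetry; apply Hv.
    apply CV_mult; [|apply cv_const]. apply CV_minus; [apply cv_const|].
    apply (recurrence a g r Ha Hg ltac:(lra) x Hxr). }
  assert (HKr : 0 <= K / r) by (unfold Rdiv; apply Rmult_le_pos; [lra|left; apply Rinv_0_lt_compat; lra]).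
  assert (Pt : forall y, r - 1 < norm y <= r -> 0 < a y /\ Rabs (a y - A) <= K / r).
  { intros y Hy. assert (Hyo : y <> o). { intro E; subst. unfold o in Hy; rewrite norm0 in Hy; lra. }
    split. apply (a_pos a g Ha Hg y Hyo). apply HK; auto. }
  assert (Diff : forall n, u n - A * v n = Gf a r (fun y => 1 * 1 + (- A) * / a y) n x).
  { intro n. rewrite (G_lin a r 1 (-A) (fun _ => 1) (fun y => / a y)). unfold u, v. ring. }
  assert (Up : forall n, u n - A * v n <= K / r * / a x).
  { intro n. rewrite Diff. eapply Rle_trans.
    apply (G_le_cond a g Ha Hg r _ (fun y => K / r * / a y) Hr); [|exact Hxr].
    - intros y Hy. destruct (Pt y Hy) as [Hay Hb]. apply abs_bounds in Hb.
      replace (1 * 1 + - A * / a y) with ((a y - A) * / a y) by (field; lra).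
      apply Rmult_le_compat_r; [left; apply Rinv_0_lt_compat; lra|lra].
    - rewrite G_scal. apply Rmult_le_compat_l; auto. apply Hvle. }
  assert (Lo : forall n, - (K / r * / a x) <= u n - A * v n).
  { intro n. rewrite Diff. eapply Rle_trans;
    [|apply (G_le_cond a g Ha Hg r (fun y => - (K / r) * / a y) _ Hr); [|exact Hxr]].
    - rewrite G_scal. assert (K / r * v n <= K / r * / a x) by (apply Rmult_le_compat_l; auto). unfold v in H. lra.
    - intros y Hy. destruct (Pt y Hy) as [Hay Hb]. apply abs_bounds in Hb.
      replace (1 * 1 + - A * / a y) with ((a y - A) * / a y) by (field; lra).
      apply Rmult_le_compat_r; [left; apply Rinv_0_lt_compat; lra|lra]. }
  assert (Cd : Un_cv (fun n => u n - A * v n) (L - A * ((1 - 0) * / a x))).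
  { apply CV_minus; auto. apply CV_mult; auto. apply cv_const. }
  pose proof (Rle_cv_lim Up Cd (cv_const _)) as B1.
  pose proof (Rle_cv_lim Lo (cv_const _) Cd) as B2.
  exists (a x * L - A). split.
  - replace (a x * L - A) with (a x * (L - A * ((1 - 0) * / a x))) by (field; lra).
    rewrite Rabs_mult, (Rabs_right (a x)) by lra.
    assert (B3 : Rabs (L - A * ((1 - 0) * / a x)) <= K / r * / a x) by (apply Rabs_le; lra).
    apply Rle_trans with (a x * (K / r * / a x)). apply Rmult_le_compat_l; lra. right; field; lra.
  - fold A. field. lra.
Qed.
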